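(* Let $(S,* )$ be a finite indecomposable cycle set of size $n$ whose permutation group $\mathcal G$ is abelian. Then $n=|\mathcal G|$.
   Context: A cycle set is a set $S$ with a binary operation $*$ such that each $t\mapsto s*t$ is bijective and $(s*t)*(s*u)=(t*s)*(t*u)$ for all $s,t,u$. Write $S=\{s_1,\dots,s_n\}$, let $\psi(s)\in\mathfrak S_n$ satisfy $s_i*s_j=s_{\psi(s_i)(j)}$, and $\mathcal G=\langle\psi(s_1),\dots,\psi(s_n)\rangle\le\mathfrak S_n$. $S$ is decomposable if there is a partition $S=X\sqcup Y$ with $X,Y$ nonempty and $\psi(s)(X)\subseteq X$, $\psi(s)(Y)\subseteq Y$ for all $s\in S$; otherwise it is indecomposable. *)

(* Defs.v *)
From mathcomp Require Import all_boot all_order all_fingroup.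
Set Implicit Arguments. Unset Strict Implicit. Unset Printing Implicit Defensive.
Import GroupScope.

Definition left_bij (S : finType) (op : S -> S -> S) : Prop :=
  forall s, injective (op s).

Definition cycle_set (S : finType) (op : S -> S -> S) : Prop :=
  left_bij op /\ forall s t u, op (op s t) (op s u) = op (op t s) (op t u).

Definition psi (S : finType) (op : S -> S -> S) (H : left_bij op) (s : S)
  : {perm S} := perm (H s).

Definition psi_group (S : finType) (op : S -> S -> S) (H : left_bij op)
  : {group {perm S}} := <<[set psi H s | s : S]>>%G.

Definition decomposable (S : finType) (op : S -> S -> S) : Prop :=
  exists X : {set S}, X != set0 /\ ~: X != set0 /\
    (forall s x, x \in X -> op s x \in X) /\
    (forall s y, y \in ~: X -> op s y \in ~: X).

Definition indecomposable (S : finType) (op : S -> S -> S) : Prop :=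
  ~ decomposable op.

(* Main.v *)
Require Import Defs.
From mathcomp Require Import all_boot all_order all_fingroup.

Theorem mainTheorem8 (S : finType) (op : S -> S -> S)
  (Hcs : cycle_set op) (Hne : 0 < #|S|) (Hind : indecomposable op) :
  abelian (psi_group (proj1 Hcs)) ->
  #|S| = #|psi_group (proj1 Hcs)|.
Proof.
Local Open Scope group_scope.
move=> Hab.
set G := psi_group (proj1 Hcs).
have psiG : forall s, psi (proj1 Hcs) s \in G.
  by move=> s; apply: mem_gen; apply: imset_f.
have psiE : forall s t, psi (proj1 Hcs) s t = op s t.
  by move=> s t; rewrite /psi permE.
have /card_gt0P [x _] := Hne.
have Horb : forall y, y \in orbit 'P G x.
  move=> y; apply/negPn/negP => Hy; apply: Hind.
  exists (orbit 'P G x); split; first by apply/set0Pn; exists x; exact: orbit_refl.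
  split; first by apply/set0Pn; exists y; rewrite in_setC.
  split.
    move=> s z /orbitP [a aG <-]; apply/orbitP; exists (a * psi (proj1 Hcs) s).
      by rewrite groupM.
    by rewrite /= !apermE permM psiE.
  move=> s z; rewrite !in_setC; apply: contra => /orbitP [a aG]; rewrite /= apermE => Ha.
  apply/orbitP; exists (a * (psi (proj1 Hcs) s)^-1); first by rewrite groupM ?groupV.
  by rewrite /= !apermE permM Ha -psiE -permM mulgV perm1.
have Hst : 'C_G[x | 'P] = 1%g.
  apply/trivgP; apply/subsetP => g /setIP [gG /astab1P gx]; apply/set1P.
  apply/permP => y; rewrite perm1.
  have /orbitP [a aG <-] := Horb y.
  rewrite /= apermE in gx.
  have cga : commute g a := centsP Hab g gG a aG.
  by rewrite /= !apermE -permM -cga permM gx.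
have := card_orbit_stab 'P G x.
rewrite Hst cards1 muln1 => <-.
rewrite -cardsT; apply: eq_card => y; by rewrite inE Horb.
Qed.
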